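(* For every integer $n\ge0$ and every real $s>-1$, \[ \int_0^1 p_n(x)x^s\,dx=(-1)^n\frac{(\tfrac12-\tfrac s2)_n}{(s+1)_{n+1}},\qquad \int_0^1 q_n(x)x^s\,dx=(-1)^n\frac{(-\tfrac s2)_n}{(s+1)_{n+1}}. \]
   Context: Pochhammer symbol: $(a)_0=1$, $(a)_n=a(a+1)\cdots(a+n-1)$. For real $a$ and integer $n\ge0$, $\binom{n+a}{n}:=\frac{(a+1)_n}{n!}$. Define \[ p_n(x)=\sum_{k=0}^n\binom nk\binom{n+\frac k2}{n}(-1)^{n-k}x^k,\qquad q_n(x)=\sum_{k=0}^n\binom nk\binom{n+\frac{k-1}2}{n}(-1)^{n-k}x^k. \] *)

(* Defs.v *)
From Stdlib Require Import Reals Lra Arith Factorial.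
Open Scope R_scope.

Fixpoint poch (a : R) (n : nat) : R :=
  match n with
  | O => 1
  | S m => poch a m * (a + INR m)
  end.

(* Generalized binomial  binom(n + a, n) := (a+1)_n / n!. *)
Definition gbinom (n : nat) (a : R) : R := poch (a + 1) n / INR (fact n).

Definition p (n : nat) (x : R) : R :=
  sum_f_R0 (fun k => C n k * gbinom n (INR k / 2) * (-1) ^ (n - k) * x ^ k) n.

Definition q (n : nat) (x : R) : R :=
  sum_f_R0 (fun k => C n k * gbinom n ((INR k - 1) / 2) * (-1) ^ (n - k) * x ^ k) n.

(* Improper Riemann integral over (0,1]:  \int_0^1 f = l  means
   f is Riemann integrable on every [e,1] with 0<e<=1 and
   \int_e^1 f -> l as e -> 0+.  (For f continuous on [0,1] this agrees
   with the ordinary Riemann integral.) *)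
Definition improper_int_0_1 (f : R -> R) (l : R) : Prop :=
  (forall e, 0 < e <= 1 -> inhabited (Riemann_integrable f e 1)) /\
  (forall eps, 0 < eps -> exists delta, 0 < delta /\
     forall e (pr : Riemann_integrable f e 1),
       0 < e -> e < delta -> e <= 1 -> Rabs (RiemannInt pr - l) < eps).

(* Main.v *)
Require Import Defs.
From Stdlib Require Import Reals Lra Lia.
Open Scope R_scope.

Fixpoint Cb (n k : nat) : R :=
  match n, k with
  | _, O => 1
  | O, S _ => 0
  | S n', S k' => Cb n' k' + Cb n' (S k')
  end.

Lemma Cb_big : forall n k, (n < k)%nat -> Cb n k = 0.
Proof.
  induction n; intros k H; destruct k; simpl; try lia; try reflexivity.
  rewrite !IHn; lia || lra.
Qed.

Lemma Cb_C : forall n k, (k <= n)%nat -> Cb n k = Binomial.C n k.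
Proof.
  induction n; intros k H.
  - assert (k = 0%nat) by lia; subst. unfold Binomial.C; simpl; field.
  - destruct k.
    + unfold Binomial.C. replace (S n - 0)%nat with (S n) by lia. change (INR (Factorial.fact 0)) with 1. rewrite Rmult_1_l. symmetry. apply Rinv_r. apply INR_fact_neq_0.
    + simpl. destruct (Nat.eq_dec k n).
      * subst k. rewrite (Cb_big n (S n)) by lia. rewrite IHn by lia.
        unfold Binomial.C. rewrite !Nat.sub_diag. field. repeat split; apply INR_fact_neq_0.
      * rewrite !IHn by lia. apply pascal. lia.
Qed.

Lemma Cb_0 n : Cb n 0 = 1. Proof. destruct n; reflexivity. Qed.

Definition E (n : nat) (f : nat -> R) : R :=
  sum_f_R0 (fun k => Cb n k * (-1) ^ k * f k) n.

Lemma E_ext : forall n f g, (forall k, f k = g k) -> E n f = E n g.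
Proof. intros. unfold E. apply sum_eq. intros. rewrite H. reflexivity. Qed.

Lemma E_plus : forall n f g, E n (fun k => f k + g k) = E n f + E n g.
Proof.
  intros. unfold E. rewrite <- plus_sum. apply sum_eq. intros. ring.
Qed.

Lemma E_scal : forall n c f, E n (fun k => c * f k) = c * E n f.
Proof.
  intros. unfold E. rewrite scal_sum. apply sum_eq. intros. ring.
Qed.

Definition Dl (f : nat -> R) := fun k => f (S k) - f k.

Lemma E_S : forall n f, E (S n) f = - E n (Dl f).
Proof.
  intros n f. unfold E.
  rewrite decomp_sum by lia. simpl Init.Nat.pred.
  set (g := fun k => Cb n k * (-1) ^ k * f k).
  assert (Hg : sum_f_R0 g (S n) = g 0%nat + sum_f_R0 (fun i => g (S i)) n).
  { rewrite decomp_sum by lia. reflexivity. }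
  rewrite tech5 in Hg. assert (Hz : g (S n) = 0) by (unfold g; rewrite (Cb_big n (S n)) by lia; ring). rewrite Hz in Hg.
  assert (H2 : sum_f_R0 (fun i => Cb (S n) (S i) * (-1) ^ (S i) * f (S i)) n =
     sum_f_R0 (fun i => g (S i)) n - sum_f_R0 (fun i => Cb n i * (-1) ^ i * f (S i)) n).
  { apply tech11. intros. unfold g. simpl. ring. }
  rewrite H2. unfold Dl.
  assert (H3 : sum_f_R0 (fun k => Cb n k * (-1) ^ k * (f (S k) - f k)) n =
     sum_f_R0 (fun i => Cb n i * (-1) ^ i * f (S i)) n - sum_f_R0 g n).
  { apply tech11. intros. unfold g. ring. }
  rewrite H3. assert (H0 : g 0%nat = f 0%nat) by (unfold g; rewrite Cb_0; simpl; ring).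
  change (sum_f_R0 (fun k => Cb n k * (-1)^k * f k) n) with (sum_f_R0 g n) in Hg.
  rewrite Cb_0. simpl. lra.
Qed.

Fixpoint PolD (d : nat) (f : nat -> R) : Prop :=
  match d with
  | O => forall k, f (S k) = f k
  | S d' => PolD d' (Dl f)
  end.

Lemma PolD_ext : forall d f g, (forall k, f k = g k) -> PolD d f -> PolD d g.
Proof.
  induction d; simpl; intros f g H Hf.
  - intros k. rewrite <- !H. apply Hf.
  - apply (IHd (Dl f)); auto. intros k. unfold Dl. rewrite !H. reflexivity.
Qed.

Lemma PolD_plus : forall d f g, PolD d f -> PolD d g -> PolD d (fun k => f k + g k).
Proof.
  induction d; simpl; intros f g Hf Hg.
  - intros k. rewrite Hf, Hg. reflexivity.
  - eapply PolD_ext; [| apply (IHd _ _ Hf Hg)]. intros k. unfold Dl. ring.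
Qed.

Lemma PolD_scal : forall d c f, PolD d f -> PolD d (fun k => c * f k).
Proof.
  induction d; simpl; intros c f Hf.
  - intros k. rewrite Hf. reflexivity.
  - eapply PolD_ext; [| apply (IHd c _ Hf)]. intros k. unfold Dl. ring.
Qed.

Lemma PolD_const : forall d c, PolD d (fun _ => c).
Proof.
  induction d; simpl; intros c.
  - reflexivity.
  - eapply PolD_ext; [| apply (IHd 0)]. intros k. unfold Dl. ring.
Qed.

Lemma PolD_S : forall d f, PolD d f -> PolD (S d) f.
Proof.
  induction d; intros f Hf.
  - simpl. intros k. unfold Dl. rewrite !Hf. ring.
  - simpl. apply IHd. exact Hf.
Qed.

Lemma PolD_shift : forall d f, PolD d f -> PolD d (fun k => f (S k)).
Proof.
  induction d; simpl; intros f Hf.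
  - intros k. apply Hf.
  - apply (IHd (Dl f)). exact Hf.
Qed.

Lemma PolD_mul_lin : forall d f al be, PolD d f ->
  PolD (S d) (fun k => f k * (al * INR k + be)).
Proof.
  induction d; intros f al be Hf.
  - simpl. intros k. unfold Dl. rewrite !Hf. rewrite !S_INR. ring.
  - change (PolD (S d) (Dl (fun k => f k * (al * INR k + be)))). simpl in Hf.
    apply (PolD_ext _ (fun k => Dl f k * (al * INR k + be) + al * f (S k))).
    + intros k. unfold Dl. cbv beta. rewrite S_INR. ring.
    + apply PolD_plus.
      * apply IHd. exact Hf.
      * apply PolD_scal. apply (PolD_shift (S d)). exact Hf.
Qed.

Lemma E_zero : forall d f, PolD d f -> forall n, (d < n)%nat -> E n f = 0.
Proof.
  induction d; intros f Hf n Hn; destruct n; try lia; rewrite E_S.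
  - simpl in Hf. rewrite (E_ext _ _ (fun k => 0 * 1)).
    + rewrite E_scal. ring.
    + intros k. unfold Dl. rewrite Hf. ring.
  - simpl in Hf. rewrite (IHd _ Hf n) by lia. ring.
Qed.

Lemma poch_S_l : forall m y, poch y (S m) = y * poch (y + 1) m.
Proof.
  induction m; intros y.
  - simpl. ring.
  - change (poch y (S (S m))) with (poch y (S m) * (y + INR (S m))).
    rewrite IHm. change (poch (y+1) (S m)) with (poch (y+1) m * (y + 1 + INR m)).
    rewrite S_INR. ring.
Qed.

Lemma poch_pos : forall m y, 0 < y -> 0 < poch y m.
Proof.
  induction m; intros y Hy; simpl.
  - lra.
  - apply Rmult_lt_0_compat; auto. pose proof (pos_INR m). lra.
Qed.

Lemma poch_1 : forall n, poch 1 n = INR (Factorial.fact n).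
Proof.
  induction n; simpl poch.
  - reflexivity.
  - rewrite IHn. change (Factorial.fact (S n)) with (S n * Factorial.fact n)%nat.
    rewrite mult_INR, S_INR. ring.
Qed.

Fixpoint Qp (a : R) (n : nat) (t : R) : R :=
  match n with
  | O => 0
  | S m => poch a m + Qp a m t * (a + INR m + t)
  end.

Lemma Qp_spec : forall n a t, poch (a + t) n = poch a n + t * Qp a n t.
Proof.
  induction n; intros a t; simpl.
  - ring.
  - rewrite IHn. ring.
Qed.

Lemma Qp_PolD : forall n a x, PolD n (fun k => Qp a (S n) ((INR k + x) / 2)).
Proof.
  induction n; intros a x.
  - simpl. intros k. ring.
  - apply (PolD_ext _ (fun k => (fun _ => poch a (S n)) k +
        (fun k => Qp a (S n) ((INR k + x) / 2)) k * (/2 * INR k + (a + INR (S n) + x/2)))).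
    + intros k. change (Qp a (S (S n)) ((INR k + x) / 2)) with
        (poch a (S n) + Qp a (S n) ((INR k + x) / 2) * (a + INR (S n) + (INR k + x) / 2)).
      field.
    + apply PolD_plus.
      * apply PolD_const.
      * apply PolD_mul_lin. apply IHn.
Qed.

Lemma E_Qp : forall n a x, E n (fun k => Qp a n ((INR k + x) / 2)) = 0.
Proof.
  intros [|n] a x.
  - unfold E. simpl. ring.
  - apply (E_zero n). apply Qp_PolD. lia.
Qed.

Lemma E_inv_poch : forall n m x, 0 < x ->
  E n (fun k => / poch (x + INR k) m) = poch (INR m) n / poch x (n + m).
Proof.
  induction n; intros m x Hx.
  - unfold E. simpl. rewrite Rplus_0_r. field. apply Rgt_not_eq, poch_pos; lra.
  - rewrite E_S.
    rewrite (E_ext _ _ (fun k => (- INR m) * / poch (x + INR k) (S m))).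
    + rewrite E_scal, IHn by lra. rewrite Nat.add_succ_r.
      rewrite (poch_S_l n (INR m)), S_INR. simpl (S n + m)%nat. field.
      apply Rgt_not_eq, poch_pos; lra.
    + intros k. unfold Dl. rewrite S_INR.
      replace (x + (INR k + 1)) with (x + INR k + 1) by ring.
      set (y := x + INR k).
      assert (Hy : 0 < y) by (unfold y; pose proof (pos_INR k); lra).
      assert (HA := poch_pos m (y + 1) ltac:(lra)).
      assert (HB := poch_pos m y Hy).
      assert (HS : poch y (S m) = poch y m * (y + INR m)) by reflexivity.
      assert (HS2 := poch_S_l m y).
      rewrite HS. rewrite HS in HS2.
      assert (HA' : poch (y + 1) m = poch y m * (y + INR m) / y) by (rewrite HS2; field; lra).
      rewrite HA'. field. pose proof (pos_INR m). lra.
Qed.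

Lemma sign_split : forall n i, (i <= n)%nat -> (-1) ^ (n - i) = (-1) ^ n * (-1) ^ i.
Proof.
  intros n i H. replace n with ((n - i) + i)%nat at 2 by lia.
  rewrite pow_add, Rmult_assoc, <- Rpow_mult_distr.
  replace (-1 * -1) with 1 by ring. rewrite pow1. ring.
Qed.

Lemma alg_main : forall n b s, -1 < s ->
  sum_f_R0 (fun k => Binomial.C n k * (poch (INR k / 2 + b) n / INR (Factorial.fact n))
     * (-1) ^ (n - k) / (INR k + s + 1)) n =
  (-1) ^ n * poch (b - 1/2 - s/2) n / poch (s + 1) (n + 1).
Proof.
  intros n b s hs.
  set (a := b - 1/2 - s/2).
  set (g := fun k => poch (INR k / 2 + b) n / (INR k + s + 1)).
  transitivity (sum_f_R0 (fun k => (Cb n k * (-1)^k * g k) * ((-1)^n / INR (Factorial.fact n))) n).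
  { apply sum_eq. intros i Hi. rewrite Cb_C by lia. rewrite sign_split by lia.
    unfold g. field. pose proof (pos_INR i). repeat split; first [apply INR_fact_neq_0 | lra]. }
  rewrite <- scal_sum. fold (E n g).
  rewrite (E_ext _ g (fun k => poch a n * / poch (s + 1 + INR k) 1 +
             / 2 * Qp a n ((INR k + (s + 1)) / 2))).
  2:{ intros k. unfold g.
      replace (INR k / 2 + b) with (a + (INR k + (s + 1)) / 2) by (unfold a; field).
      rewrite Qp_spec. simpl poch. field. pose proof (pos_INR k). lra. }
  rewrite E_plus, !E_scal, E_Qp, E_inv_poch by lra.
  simpl (INR 1). rewrite poch_1. field. split.
  - apply Rgt_not_eq, poch_pos; lra.
  - apply INR_fact_neq_0.
Qed.
From Coquelicot Require Import Coquelicot.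
From Coquelicot Require Import Coquelicot.

Lemma Rpower_1_base : forall r, Rpower 1 r = 1.
Proof. intros. unfold Rpower. rewrite ln_1, Rmult_0_r. apply exp_0. Qed.

Lemma term_int : forall c k s e, -1 < s -> 0 < e -> e <= 1 ->
  is_RInt (fun x => c * x ^ k * Rpower x s) e 1
    (c / (INR k + s + 1) * (1 - Rpower e (INR k + s + 1))).
Proof.
  intros c k s e hs he he1.
  set (r := INR k + s + 1).
  assert (hr : 0 < r) by (unfold r; pose proof (pos_INR k); lra).
  apply (is_RInt_ext (fun x => c * Rpower x (INR k + s))).
  { intros x [Hx1 Hx2]. rewrite Rmin_left in Hx1 by lra.
    change (@eq R (c * Rpower x (INR k + s)) (c * x ^ k * Rpower x s)).
    rewrite Rpower_plus, Rpower_pow by lra. ring. }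
  replace (c / r * (1 - Rpower e r)) with
    (minus ((fun x => c / r * Rpower x r) 1) ((fun x => c / r * Rpower x r) e)).
  2:{ simpl. rewrite Rpower_1_base. unfold minus, plus, opp; simpl. ring. }
  apply (is_RInt_derive (fun x => c / r * Rpower x r) (fun x => c * Rpower x (INR k + s))).
  - intros x [Hx1 Hx2]. rewrite Rmin_left in Hx1 by lra.
    replace (c * Rpower x (INR k + s)) with (c / r * (r * Rpower x (r - 1))).
    2:{ replace (r - 1) with (INR k + s) by (unfold r; ring). field. lra. }
    apply is_derive_scal. apply is_derive_Reals. apply derivable_pt_lim_power. lra.
  - intros x [Hx1 Hx2]. rewrite Rmin_left in Hx1 by lra.
    apply (@ex_derive_continuous R_AbsRing R_NormedModule (fun x => c * Rpower x (INR k + s))). apply ex_derive_scal.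
    eexists. apply is_derive_Reals. apply derivable_pt_lim_power. lra.
Qed.

Lemma sum_int : forall (c : nat -> R) n s e, -1 < s -> 0 < e -> e <= 1 ->
  is_RInt (fun x => sum_f_R0 (fun k => c k * x ^ k) n * Rpower x s) e 1
    (sum_f_R0 (fun k => c k / (INR k + s + 1) * (1 - Rpower e (INR k + s + 1))) n).
Proof.
  intros c n s e hs he he1. induction n.
  - exact (term_int (c 0%nat) 0 s e hs he he1).
  - apply (is_RInt_ext (fun x => plus (sum_f_R0 (fun k => c k * x ^ k) n * Rpower x s)
        (c (S n) * x ^ S n * Rpower x s))).
    + intros x _. unfold plus; simpl. change (@eq R (sum_f_R0 (fun k => c k * x ^ k) n * Rpower x s + c (S n) * x ^ S n * Rpower x s) ((sum_f_R0 (fun k => c k * x ^ k) n + c (S n) * x ^ S n) * Rpower x s)). ring.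
    + apply (is_RInt_plus _ _ _ _ _ _ IHn (term_int (c (S n)) (S n) s e hs he he1)).
Qed.

Lemma sum_bound : forall (a : nat -> R) n s e, -1 < s -> 0 < e -> e <= 1 ->
  Rabs (sum_f_R0 (fun k => a k * Rpower e (INR k + s + 1)) n) <=
  sum_f_R0 (fun k => Rabs (a k)) n * Rpower e (s + 1).
Proof.
  intros a n s e hs he he1.
  assert (Hk : forall k, Rabs (a k * Rpower e (INR k + s + 1)) <= Rabs (a k) * Rpower e (s + 1)).
  { intros k. rewrite Rabs_mult. apply Rmult_le_compat_l; [apply Rabs_pos|].
    replace (INR k + s + 1) with (INR k + (s + 1)) by ring.
    rewrite Rpower_plus, Rpower_pow by lra.
    assert (0 < Rpower e (s + 1)) by (unfold Rpower; apply exp_pos).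
    assert (0 < e ^ k) by (apply pow_lt; lra).
    assert (e ^ k <= 1) by (rewrite <- (pow1 k); apply pow_incr; lra).
    rewrite Rabs_right by nra. nra. }
  induction n.
  - simpl. apply Hk.
  - simpl. eapply Rle_trans; [apply Rabs_triang|]. rewrite Rmult_plus_distr_r.
    apply Rplus_le_compat; auto.
Qed.

Lemma sum_abs_pos : forall (a : nat -> R) n, 0 <= sum_f_R0 (fun k => Rabs (a k)) n.
Proof.
  intros a n. induction n; simpl.
  - apply Rabs_pos.
  - pose proof (Rabs_pos (a (S n))). lra.
Qed.

Lemma int_poly : forall (c : nat -> R) n s, -1 < s ->
  improper_int_0_1 (fun x => sum_f_R0 (fun k => c k * x ^ k) n * Rpower x s)
    (sum_f_R0 (fun k => c k / (INR k + s + 1)) n).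
Proof.
  intros c n s hs. split.
  - intros e [he he1]. constructor. apply ex_RInt_Reals_0.
    eexists. apply sum_int; auto.
  - intros eps Heps.
    pose (a := fun k => c k / (INR k + s + 1)).
    pose (M := sum_f_R0 (fun k => Rabs (a k)) n).
    assert (HM : 0 <= M) by apply sum_abs_pos.
    assert (Hq : 0 < eps / (M + 1)) by (apply Rdiv_lt_0_compat; lra).
    exists (Rpower (eps / (M + 1)) (/ (s + 1))). split.
    { unfold Rpower. apply exp_pos. }
    intros e pr he hed he1.
    rewrite <- RInt_Reals.
    rewrite (is_RInt_unique _ _ _ _ (sum_int c n s e hs he he1)).
    assert (Heq : sum_f_R0 (fun k => c k / (INR k + s + 1) * (1 - Rpower e (INR k + s + 1))) n
       - sum_f_R0 (fun k => c k / (INR k + s + 1)) n =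
       - sum_f_R0 (fun k => a k * Rpower e (INR k + s + 1)) n).
    { match goal with |- _ = - ?S => replace (- S) with (-1 * S) by ring end.
      rewrite scal_sum, <- minus_sum. apply sum_eq. intros. unfold a. ring. }
    rewrite Heq, Rabs_Ropp.
    eapply Rle_lt_trans; [apply sum_bound; auto|]. fold a. fold M.
    assert (HX : Rpower e (s + 1) < eps / (M + 1)).
    { replace (eps / (M + 1)) with (Rpower (Rpower (eps / (M + 1)) (/ (s + 1))) (s + 1)).
      - apply Rlt_Rpower_l; lra.
      - rewrite Rpower_mult. rewrite Rinv_l by lra.
        unfold Rpower. rewrite Rmult_1_l. apply exp_ln. exact Hq. }
    assert (HX0 : 0 < Rpower e (s + 1)) by (unfold Rpower; apply exp_pos).
    apply Rle_lt_trans with (M * (eps / (M + 1))).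
    + apply Rmult_le_compat_l; lra.
    + apply Rmult_lt_reg_r with (M + 1); [lra|].
      unfold Rdiv. rewrite (Rmult_assoc M), (Rmult_assoc eps), Rinv_l by lra. nra.
Qed.

Lemma impr_eq : forall f l l', improper_int_0_1 f l -> l = l' -> improper_int_0_1 f l'.
Proof. intros f l l' H E0. subst. exact H. Qed.

Theorem mainTheorem3 (n : nat) (s : R) (hs : -1 < s) :
  improper_int_0_1 (fun x => p n x * Rpower x s)
    ((-1) ^ n * poch (1/2 - s/2) n / poch (s + 1) (n + 1)) /\
  improper_int_0_1 (fun x => q n x * Rpower x s)
    ((-1) ^ n * poch (- (s/2)) n / poch (s + 1) (n + 1)).
Proof.
  split.
  - eapply impr_eq.
    + exact (int_poly (fun k => Binomial.C n k * gbinom n (INR k / 2) * (-1) ^ (n - k)) n s hs).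
    + unfold gbinom. rewrite (alg_main n 1 s hs).
      replace (1 - 1/2 - s/2) with (1/2 - s/2) by field. reflexivity.
  - eapply impr_eq.
    + exact (int_poly (fun k => Binomial.C n k * gbinom n ((INR k - 1) / 2) * (-1) ^ (n - k)) n s hs).
    + unfold gbinom.
      transitivity (sum_f_R0 (fun k => Binomial.C n k * (poch (INR k / 2 + 1/2) n / INR (Factorial.fact n))
         * (-1) ^ (n - k) / (INR k + s + 1)) n).
      * apply sum_eq. intros i _.
        replace ((INR i - 1) / 2 + 1) with (INR i / 2 + 1/2) by field. reflexivity.
      * rewrite (alg_main n (1/2) s hs).
        replace (1/2 - 1/2 - s/2) with (- (s/2)) by field. reflexivity.
Qed.
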